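(* For every finite simple graph $G$, $\chi_s(G)\le \tau(G)$.
   Context: $\tau(G)$ denotes the number of vertices in a longest path of $G$. A star colouring of $G$ is a proper vertex colouring in which every path on four vertices uses at least three distinct colours; the star chromatic number $\chi_s(G)$ is the least number of colours in a star colouring of $G$. *)

(* Defs.v *)
From mathcomp Require Import all_boot.
Set Implicit Arguments. Unset Strict Implicit. Unset Printing Implicit Defensive.

Definition simple_graph (T : finType) (e : rel T) : Prop :=
  symmetric e /\ irreflexive e.

Definition is_gpath (T : finType) (e : rel T) (s : seq T) : bool :=
  uniq s && (if s is x :: s' then path e x s' else true).

Definition has_path_on (T : finType) (e : rel T) (n : nat) : bool :=
  [exists t : n.-tuple T, is_gpath e t].

(* tau(G): number of vertices in a longest path (0 for the empty graph);
   a path has at most #|T| vertices. *)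
Definition tau (T : finType) (e : rel T) : nat :=
  \max_(n < #|T|.+1 | has_path_on e n) n.

Definition star_colouring (T : finType) (e : rel T) (k : nat)
    (c : {ffun T -> 'I_k}) : bool :=
  [forall x, forall y, e x y ==> (c x != c y)] &&
  [forall t : 4.-tuple T, is_gpath e t ==> (3 <= size (undup (map c t)))].

Definition star_colourable_k (T : finType) (e : rel T) (k : nat) : bool :=
  [exists c : {ffun T -> 'I_k}, star_colouring e c].

Lemma star_colourable (T : finType) (e : rel T) :
  simple_graph e -> exists k, star_colourable_k e k.
Proof.
move=> [_ irr]; exists #|T|; apply/existsP; exists [ffun x => enum_rank x].
apply/andP; split.
- apply/forallP=> x; apply/forallP=> y; apply/implyP=> exy.
  rewrite !ffunE; apply/negP=> /eqP/enum_rank_inj Exy.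
  by move: exy; rewrite Exy irr.
- apply/forallP=> t; apply/implyP=> /andP [ut _].
  rewrite undup_id; first by rewrite size_map size_tuple.
  rewrite map_inj_uniq // => x y; rewrite !ffunE; exact: enum_rank_inj.
Qed.

Definition chi_s (T : finType) (e : rel T) (G : simple_graph e) : nat :=
  ex_minn (star_colourable G).

(* Main.v *)
Require Import Defs.
From mathcomp Require Import all_boot.
Set Implicit Arguments. Unset Strict Implicit. Unset Printing Implicit Defensive.

Section Build.
Variables (T : finType) (e : rel T).
Hypothesis esym : symmetric e.
Hypothesis eirr : irreflexive e.

Record Inv (S : {set T}) (P : seq T) (ch : T -> seq T) : Prop := {
  i1 : is_gpath e P;
  i2 : forall x, x \in P -> x \notin S;
  i3 : forall v, v \notin S -> [/\ is_gpath e (ch v), v \in ch v &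
         forall x, x \in ch v -> x \notin S /\ ch x = take (index x (ch v)).+1 (ch v)];
  i4 : forall p, p \in P -> ch p = take (index p P).+1 P;
  i5 : forall x y, x \notin S -> y \notin S -> e x y -> x \in ch y \/ y \in ch x;
  i6 : forall x y, x \in S -> y \notin S -> e x y -> y \in P }.

Lemma memNeq (A : pred T) x y : x \in A -> y \notin A -> x != y.
Proof. by move=> xA; apply: contraNneq => <-. Qed.

Lemma gpath_take (Q R : seq T) : is_gpath e (Q ++ R) -> is_gpath e Q.
Proof.
case/andP=> u p; apply/andP; split; first by move: u; rewrite cat_uniq; case/andP.
by clear u; case: Q p => //= x s; rewrite cat_path; case/andP.
Qed.

Lemma step (S : {set T}) (P : seq T) (ch : T -> seq T) (r0 : T) : r0 \in S -> Inv S P ch ->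
  exists r P' ch', [/\ r \in S & Inv (S :\ r) P' ch'].
Proof.
move=> r0S [h1 h2 h3 h4 h5 h6].
pose nb y := [exists x in S, e x y].
pose k := \max_(j < size P | nb (nth r0 P j)) j.+1.
have kle : k <= size P by apply/bigmax_leqP => j _; exact: ltn_ord.
have kmax : forall y, y \in P -> nb y -> index y P < k.
  move=> y yP nby; have yP' := yP; rewrite -index_mem in yP'.
  have := @leq_bigmax_cond _ (fun j : 'I_(size P) => nb (nth r0 P j)) (fun j => (nat_of_ord j).+1) (Ordinal yP').
  by rewrite /= nth_index //; apply.
have kpos : 0 < k -> nb (nth r0 P k.-1).
  move=> kp; have [j jP kj] : exists2 j : 'I_(size P), nb (nth r0 P j) & k = j.+1.
    have : 0 < #|[pred j : 'I_(size P) | nb (nth r0 P j)]|.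
      rewrite lt0n; apply/negP => /eqP/card0_eq H.
      move: kp; rewrite /k big1 // => j /=; have := H j; rewrite !inE => ->//.
    move/(eq_bigmax_cond (fun j : 'I_(size P) => (nat_of_ord j).+1)) => [j jin E].
    by exists j => //; rewrite /k; exact: E.
  by rewrite kj.
pose Q := take k P; pose R := drop k P.
have PQR : P = Q ++ R by rewrite cat_take_drop.
have sQ : size Q = k by rewrite size_takel.
pose r := if [pick x in S | (0 < k) && e x (nth r0 P k.-1)] is Some x then x else r0.
have rS : r \in S by rewrite /r; case: pickP => // x /andP[].
have rk : 0 < k -> e r (nth r0 P k.-1).
  move=> kp; rewrite /r; case: pickP => [x /and3P[]//|].
  move: (kpos kp) => /existsP[x /andP[xS ex]] /(_ x); by rewrite xS kp ex.
have QP : forall x, x \in Q -> x \in P by move=> x; rewrite PQR mem_cat => ->.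
have rQ : r \notin Q by apply/negP => /QP /h2; rewrite rS.
have nbQ : forall y, y \in P -> nb y -> y \in Q.
  by move=> y yP nby; rewrite /Q in_take // kmax.
have idxQ : forall p, p \in Q -> index p P = index p Q.
  by move=> p pQ; rewrite PQR index_cat pQ.
pose P' := rcons Q r.
pose ch' := fun v => if v == r then P' else ch v.
have gP' : is_gpath e P'.
  have gQ : is_gpath e Q by apply: (@gpath_take Q R); rewrite -PQR.
  case/andP: gQ => uQ pQ; apply/andP; split; first by rewrite rcons_uniq rQ uQ.
  rewrite /P'; case EQ: Q pQ => [|x s] //= pQ.
  rewrite rcons_path pQ /= esym.
  have kp : 0 < k by rewrite -sQ EQ.
  have -> : last x s = nth r0 P k.-1.
    have -> : last x s = nth r0 Q k.-1 by rewrite -sQ nth_last EQ.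
    by rewrite /Q nth_take // ltn_predL.
  exact: rk.
have h4' : forall p, p \in P' -> ch' p = take (index p P').+1 P'.
  move=> p; rewrite /P' mem_rcons inE => /orP[/eqP->|pQ].
    rewrite /ch' eqxx -cats1 index_cat (negbTE rQ) /= eqxx addn0 take_oversize //.
    by rewrite /P' cats1.
    by rewrite size_cat addn1.
  have pr : p != r by apply: memNeq pQ rQ.
  rewrite /ch' (negbTE pr) h4 ?QP // /P' -cats1 index_cat pQ idxQ //.
  rewrite takel_cat ?index_mem //.
  by rewrite {1}PQR takel_cat // index_mem.
exists r, P', ch'; split => //; split => //.
- move=> x; rewrite /P' mem_rcons inE => /orP[/eqP->|/QP xP].
    by rewrite !inE eqxx.
  by rewrite !inE negb_and (h2 _ xP) orbT.
- move=> v; rewrite !inE negb_and negbK => /orP[/eqP vr|vS].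
    rewrite /ch' vr eqxx; split => //; first by rewrite mem_rcons inE eqxx.
    move=> x xP'; split; last by rewrite -(h4' x xP') /ch'.
    move: xP'; rewrite /P' mem_rcons inE => /orP[/eqP->|/QP xP].
      by rewrite !inE eqxx.
    by rewrite !inE negb_and (h2 _ xP) orbT.
  have vr : v != r by rewrite eq_sym; apply: memNeq rS vS.
  rewrite /ch' (negbTE vr); have [g vv H] := h3 _ vS; split => //.
  move=> x xv; have [xS ->] := H _ xv.
  have xr : x != r by rewrite eq_sym; apply: memNeq rS xS.
  by rewrite (negbTE xr) !inE negb_and xS orbT.
- move=> x y; rewrite !inE !negb_and !negbK => /orP[/eqP xr|xS] /orP[/eqP yr|yS] exy.
  + by move: exy; rewrite xr yr eirr.
  + have yr : y != r by rewrite eq_sym; apply: memNeq rS yS.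
    subst x; right; rewrite /ch' eqxx /P' mem_rcons inE.
    apply/orP; right; apply: nbQ; first exact: (h6 r).
    by apply/existsP; exists r; rewrite rS.
  + have xr : x != r by rewrite eq_sym; apply: memNeq rS xS.
    subst y; left; rewrite /ch' eqxx /P' mem_rcons inE.
    apply/orP; right; apply: nbQ; first by apply: (h6 r) => //; rewrite esym.
    by apply/existsP; exists r; rewrite rS esym.
  + have xr : x != r by rewrite eq_sym; apply: memNeq rS xS.
    have yr : y != r by rewrite eq_sym; apply: memNeq rS yS.
    by rewrite /ch' (negbTE xr) (negbTE yr); apply: h5.
- move=> x y; rewrite !inE negb_and negbK => /andP[xr xS] /orP[/eqP yr|yS] exy.
    by rewrite /P' mem_rcons inE yr eqxx.
  rewrite /P' mem_rcons inE; apply/orP; right; apply: nbQ; first exact: (h6 x).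
  by apply/existsP; exists x; rewrite xS.
Qed.

Lemma build n : forall (S : {set T}) (P : seq T) (ch : T -> seq T), #|S| <= n -> Inv S P ch ->
  exists P' ch', Inv set0 P' ch'.
Proof.
elim: n => [|n IH] S P ch.
  rewrite leqn0 => /eqP/cards0_eq SE H; rewrite SE in H; by exists P, ch.
move=> Sn H; case: (set_0Vmem S) => [SE|[r0 r0S]]; first by rewrite SE in H; exists P, ch.
have [r [P' [ch' [rS H']]]] := step r0S H.
apply: (IH _ _ _ _ H'); move: Sn; by rewrite (cardsD1 r S) rS.
Qed.

Lemma exists_ch : exists ch : T -> seq T,
  (forall v, [/\ is_gpath e (ch v), v \in ch v &
         forall x, x \in ch v -> ch x = take (index x (ch v)).+1 (ch v)]) /\
  (forall x y, e x y -> x \in ch y \/ y \in ch x).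
Proof.
have H0 : Inv [set: T] [::] (fun _ => [::]).
  split => //.
  - by move=> v; rewrite in_setT.
  - by move=> x y; rewrite in_setT.
  - by move=> x y _; rewrite in_setT.
have [P [ch [_ _ h3 _ h5 _]]] := build (leqnn _) H0.
exists ch; split.
  move=> v; have [g vv H] := h3 v (negbT (in_set0 v)); split => // x /H [] //.
by move=> x y; apply: h5; rewrite in_set0.
Qed.
End Build.

Section Col.
Variables (T : finType) (e : rel T).
Hypothesis esym : symmetric e.
Hypothesis eirr : irreflexive e.
Variable ch : T -> seq T.
Hypothesis H1 : forall v, [/\ is_gpath e (ch v), v \in ch v &
         forall x, x \in ch v -> ch x = take (index x (ch v)).+1 (ch v)].
Hypothesis H2 : forall x y, e x y -> x \in ch y \/ y \in ch x.

Definition dep v := (size (ch v)).-1.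

Lemma sz_take x y : x \in ch y -> size (ch x) = (index x (ch y)).+1.
Proof.
move=> xy; have [_ _ H] := H1 y; rewrite (H _ xy) size_takel //.
by rewrite index_mem.
Qed.

Lemma dep_in x y : x \in ch y -> dep x = index x (ch y).
Proof. by move=> xy; rewrite /dep (sz_take xy). Qed.

Lemma dep_self y : dep y = index y (ch y).
Proof. by have [_ yy _] := H1 y; apply: dep_in. Qed.

Lemma dep_lt x y : x \in ch y -> x != y -> dep x < dep y.
Proof.
move=> xy nxy; rewrite (dep_in xy); have [_ yy _] := H1 y.
have : index x (ch y) < (index y (ch y)).+1 by rewrite -(sz_take yy) index_mem.
rewrite ltnS leq_eqVlt (dep_self y) => /orP[/eqP E|//]; exfalso.
have : x = y by rewrite -(nth_index x xy) E (nth_index _ yy).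
by move/eqP: nxy.
Qed.

Lemma dep_inj x z y : x \in ch y -> z \in ch y -> dep x = dep z -> x = z.
Proof.
move=> xy zy; rewrite (dep_in xy) (dep_in zy) => E.
by rewrite -(nth_index x xy) E nth_index.
Qed.

Lemma edge_lt x y : e x y -> dep x < dep y -> x \in ch y.
Proof.
move=> exy lt; case: (H2 exy) => // yx.
have nyx : y != x by apply/eqP => E; move: exy; rewrite E eirr.
by move: (dep_lt yx nyx); rewrite ltnNge ltnW.
Qed.

Lemma edge_neq x y : e x y -> dep x != dep y.
Proof.
move=> exy; have nxy : x != y by apply/eqP => E; move: exy; rewrite E eirr.
case: (H2 exy) => H.
  by rewrite neq_ltn (dep_lt H nxy).
by rewrite neq_ltn (dep_lt H _) ?orbT // eq_sym.
Qed.

Lemma dep_tau v : dep v < tau e.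
Proof.
have [g vv _] := H1 v.
have szp : 0 < size (ch v) by case: (ch v) vv.
have szT : size (ch v) < #|T|.+1.
  rewrite ltnS; case/andP: g => /card_uniqP <- _; exact: max_card.
have hp : has_path_on e (size (ch v)).
  by apply/existsP; exists (in_tuple (ch v)).
rewrite /dep prednK //.
have := @leq_bigmax_cond _ (fun n : 'I_#|T|.+1 => has_path_on e n) (fun n => nat_of_ord n) (Ordinal szT) hp.
by rewrite /tau /=.
Qed.

Definition col : {ffun T -> 'I_(tau e)} := [ffun v => Ordinal (dep_tau v)].

Lemma colE x y : (col x == col y) = (dep x == dep y).
Proof. by rewrite -(inj_eq val_inj) /= !ffunE. Qed.

Lemma col_star : star_colouring e col.
Proof.
apply/andP; split.
  apply/forallP=> x; apply/forallP=> y; apply/implyP=> exy.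
  by rewrite colE; exact: edge_neq.
apply/forallP=> t; apply/implyP; case: t => s.
case: s => [|a [|b [|c [|d [|? ?]]]]] // sz /andP[u p].
have /and5P[ab ac ad bc bd] : [&& a != b, a != c, a != d, b != c & b != d].
  by move: u; rewrite /= !inE !negb_or; case/andP=> /and3P[-> -> ->] /andP[/andP[-> ->] _].
have /and3P[eab ebc ecd] : [&& e a b, e b c & e c d] by move: p; rewrite /= andbT.
have key : (dep a != dep c) || (dep b != dep d).
  rewrite -negb_and; apply/negP => /andP[/eqP E1 /eqP E2].
  have := edge_neq eab; rewrite neq_ltn => /orP[lt|lt].
  - have ab' := edge_lt eab lt.
    have cb' : c \in ch b by apply: edge_lt; rewrite 1?esym // -E1.
    by move: ac; rewrite (dep_inj ab' cb' E1) eqxx.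
  - have bc' : b \in ch c by apply: edge_lt; rewrite // -E1.
    have dc' : d \in ch c by apply: edge_lt; rewrite 1?esym // -E2 -E1.
    by move: bd; rewrite (dep_inj bc' dc' E2) eqxx.
case/orP: key => key.
- apply: (@leq_trans (size [:: col a; col b; col c])) => //.
  apply: uniq_leq_size.
    by rewrite /= !inE !colE negb_or (edge_neq eab) (edge_neq ebc) key.
  by move=> z; rewrite mem_undup /= !inE => /or3P[]/eqP->; rewrite eqxx ?orbT.
- apply: (@leq_trans (size [:: col b; col c; col d])) => //.
  apply: uniq_leq_size.
    by rewrite /= !inE !colE negb_or (edge_neq ebc) (edge_neq ecd) key.
  by move=> z; rewrite mem_undup /= !inE => /or3P[]/eqP->; rewrite eqxx ?orbT.
Qed.
End Col.

Theorem theorem3p1 (T : finType) (e : rel T) (G : simple_graph e) :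
  chi_s G <= tau e.
Proof.
rewrite /chi_s; case: ex_minnP => m _ minm; apply: minm.
have [esym eirr] := G.
have [ch [H1 H2]] := exists_ch esym eirr.
apply/existsP; eexists; apply: col_star => //; eassumption.
Qed.
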